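(* Let $1<K<n$ and $x\in\mathbb{R}^n$, and let $s(x)$, $i_x$, $\delta(x)$, $u(x)$ be as defined in the context. Then: (1) for $i=1,\dots,K-1$: $s(x)_{i+1}-s(x)_i=\frac{1}{K-i+1}\big(s(x)_{i+1}-|x|_{[i]}\big)=\frac{1}{K-i}\big(s(x)_i-|x|_{[i]}\big)$; (2) $s(x)_1\ge\dots\ge s(x)_{i_x}$ and $s(x)_{i_x}\le\dots\le s(x)_K$; (3) $u(x)\ge_m|x|$; (4) $u(x)_1=\max\{|x|_{[1]},s(x)_1\}$.
   Context: For $v\in\mathbb{R}^n$, $v_{[i]}$ is the $i$-th largest component, and $|x|$ is the componentwise absolute value, so $|x|_{[i]}$ is the $i$-th largest absolute value. Define $s(x)_i=\frac{\sum_{j=i}^n|x|_{[j]}}{K-i+1}$ for $i=1,\dots,K$, and $s(x)_0=s(x)_{K+1}=\infty$. Let $i_x$ be the smallest index in $\{1,\dots,K\}$ minimizing $s(x)_i$, $\delta(x)=s(x)_{i_x}$, and define $u(x)\in\mathbb{R}^n$ by $u(x)_i=|x|_{[i]}$ for $i\le i_x-1$, $u(x)_i=\delta(x)$ for $i_x\le i\le K$, and $u(x)_i=0$ for $i>K$. $a\ge_m b$ means $\sum_{i=1}^j a_{[i]}\ge\sum_{i=1}^j b_{[i]}$ for $j<n$ with equality for $j=n$. *)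

(* Defs.v *)
From HB Require Import structures.
From mathcomp Require Import all_boot all_order all_algebra.
Set Implicit Arguments. Unset Strict Implicit. Unset Printing Implicit Defensive.
Import Order.TTheory GRing.Theory Num.Theory.
Local Open Scope ring_scope.

Section Defs.
Variables (R : realFieldType) (n K : nat).

Definition absv (x : 'I_n -> R) : 'I_n -> R := fun i => `|x i|.

Definition dsort (v : 'I_n -> R) : seq R :=
  sort (fun a b : R => b <= a) [seq v i | i <- enum 'I_n].

(* v_[i] : the i-th largest component, 1-based (i = 1..n) *)
Definition kth (v : 'I_n -> R) (i : nat) : R := nth 0 (dsort v) i.-1.

Definition sx (x : 'I_n -> R) (i : nat) : R :=
  (\sum_(i <= j < n.+1) kth (absv x) j) / (K - i + 1)%:R.

(* i_x : the smallest index in {1..K} minimizing s(x)_i *)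
Definition ix (x : 'I_n -> R) : nat :=
  (find (fun i => all (fun j => sx x i <= sx x j) (iota 1 K)) (iota 1 K)).+1.

Definition delta (x : 'I_n -> R) : R := sx x (ix x).

(* u(x)_k, 1-based index k *)
Definition uf (x : 'I_n -> R) (k : nat) : R :=
  if (k < ix x)%N then kth (absv x) k
  else if (k <= K)%N then delta x else 0.

(* u(x) as a vector in R^n (entry i : 'I_n is the (i+1)-th component) *)
Definition u (x : 'I_n -> R) : 'I_n -> R := fun i => uf x i.+1.

Definition majorizes (a b : 'I_n -> R) : Prop :=
  (forall j : nat, (j < n)%N ->
     \sum_(1 <= i < j.+1) kth b i <= \sum_(1 <= i < j.+1) kth a i) /\
  \sum_(1 <= i < n.+1) kth a i = \sum_(1 <= i < n.+1) kth b i.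

End Defs.

(* Main.v *)
Require Import Defs.
From HB Require Import structures.
From mathcomp Require Import all_boot all_order all_algebra.
From mathcomp Require Import ring lra zify.
Import Order.TTheory GRing.Theory Num.Theory.
Local Open Scope ring_scope.

Lemma dsort_size (R : realFieldType) (n : nat) (v : 'I_n -> R) :
  size (dsort v) = n.
Proof. by rewrite /dsort size_sort size_map size_enum_ord. Qed.

Lemma ge_trans (R : realFieldType) : transitive (fun a b : R => b <= a).
Proof. by move=> a b c /= h1 h2; apply: le_trans h2 h1. Qed.

Lemma dsort_sorted (R : realFieldType) (n : nat) (v : 'I_n -> R) :
  sorted (fun a b : R => b <= a) (dsort v).
Proof. by apply: sort_sorted => a b /=; rewrite le_total. Qed.

Lemma kth_abs_ge0 (R : realFieldType) (n : nat) (x : 'I_n -> R) i :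
  0 <= kth (absv x) i.
Proof.
rewrite /kth; case: (ltnP i.-1 (size (dsort (absv x)))) => h.
  have : nth 0 (dsort (absv x)) i.-1 \in dsort (absv x) by apply: mem_nth.
  by rewrite /dsort mem_sort => /mapP [j _ ->]; rewrite /absv normr_ge0.
by rewrite nth_default.
Qed.

Lemma kth_abs_mono (R : realFieldType) (n : nat) (x : 'I_n -> R) i :
  (0 < i)%N -> kth (absv x) i.+1 <= kth (absv x) i.
Proof.
move=> hi; rewrite /kth /=.
case: (ltnP i (size (dsort (absv x)))) => h.
  have := (sorted_leq_nth (@ge_trans R) (fun a => lexx a) 0 (@dsort_sorted R n (absv x)) i.-1 i).
  apply.
  - by rewrite inE; case: i hi h => // i _ /= h; apply: ltnW.
  - by rewrite inE.
  - by case: i hi {h}.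
rewrite (nth_default 0 h).
have := @kth_abs_ge0 R n x i; by rewrite /kth.
Qed.

Set Implicit Arguments. Unset Strict Implicit.

Definition SS (R : realFieldType) (a : nat -> R) (n i : nat) : R :=
  \sum_(i <= j < n.+1) a j.
Definition sg (R : realFieldType) (a : nat -> R) (n K i : nat) : R :=
  SS a n i / (K - i + 1)%:R.
Definition Pmin (R : realFieldType) (a : nat -> R) (n K i : nat) : bool :=
  all (fun j => sg a n K i <= sg a n K j) (iota 1 K).
Definition ixg (R : realFieldType) (a : nat -> R) (n K : nat) : nat :=
  (find (Pmin a n K) (iota 1 K)).+1.
Definition Hyp (R : realFieldType) (a : nat -> R) (n K : nat) : Prop :=
  [/\ (forall i, 0 <= a i), (forall i, (0 < i)%N -> a i.+1 <= a i),
      (1 < K)%N & (K < n)%N].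

Lemma SS_rec (R : realFieldType) (a : nat -> R) n i :
  (i <= n)%N -> SS a n i = a i + SS a n i.+1.
Proof. by move=> h; rewrite /SS big_ltn. Qed.

Lemma SS_ge0 (R : realFieldType) (a : nat -> R) n K i :
  Hyp a n K -> 0 <= SS a n i.
Proof. by case=> h0 _ _ _; apply: sumr_ge0 => j _. Qed.

Lemma sg_ge0 (R : realFieldType) (a : nat -> R) n K i :
  Hyp a n K -> 0 <= sg a n K i.
Proof. by move=> H; apply: divr_ge0; [apply: (SS_ge0 i H)|]. Qed.

Lemma formula (R : realFieldType) (a : nat -> R) n K i :
  Hyp a n K -> (1 <= i)%N -> (i < K)%N ->
  sg a n K i.+1 - sg a n K i = (sg a n K i.+1 - a i) / (K - i + 1)%:R /\
  sg a n K i.+1 - sg a n K i = (sg a n K i - a i) / (K - i)%:R.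
Proof.
case=> _ _ _ hKn hi hiK.
rewrite /sg (SS_rec a (_ : i <= n)%N); last by lia.
have -> : (K - i.+1 + 1 = K - i)%N by lia.
have hm : (K - i)%:R != 0 :> R by rewrite pnatr_eq0; lia.
have hm1 : (K - i + 1)%:R != 0 :> R by rewrite pnatr_eq0; lia.
rewrite natrD in hm1 *.
set m := (K - i)%:R : R in hm hm1 *. set S := SS a n i.+1. clearbody m S. by split; field; rewrite hm hm1.
Qed.

Lemma sign1 (R : realFieldType) (a : nat -> R) n K i :
  Hyp a n K -> (1 <= i)%N -> (i < K)%N ->
  (0 <= sg a n K i.+1 - sg a n K i) = (a i <= sg a n K i.+1).
Proof.
move=> H hi hiK; have [-> _] := formula H hi hiK.
by rewrite ler_pdivlMr ?mul0r ?subr_ge0 // ltr0n; lia.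
Qed.

Lemma sign2 (R : realFieldType) (a : nat -> R) n K i :
  Hyp a n K -> (1 <= i)%N -> (i < K)%N ->
  (0 <= sg a n K i.+1 - sg a n K i) = (a i <= sg a n K i).
Proof.
move=> H hi hiK; have [_ ->] := formula H hi hiK.
by rewrite ler_pdivlMr ?mul0r ?subr_ge0 // ltr0n; lia.
Qed.

Lemma propag (R : realFieldType) (a : nat -> R) n K i j :
  Hyp a n K -> (1 <= i)%N -> (i <= j)%N -> (j < K)%N ->
  0 <= sg a n K i.+1 - sg a n K i -> 0 <= sg a n K j.+1 - sg a n K j.
Proof.
move=> H hi; elim: j => [|j IH] hij hjK hd; first by lia.
case: (ltngtP i j.+1) => [h|h|<-] //; last by lia.
have hj : (0 < j)%N by lia.
have := IH (_ : i <= j)%N (_ : j < K)%N hd; move=> /(_ _ _) d0.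
have {}d0 := d0 (ltac:(lia)) (ltac:(lia)).
have hj1 : (1 <= j)%N by lia.
have hjK1 : (j < K)%N by lia.
rewrite (sign1 H hj1 hjK1) in d0.
rewrite (sign2 H) //.
case: H => _ hm _ _; exact: le_trans (hm _ hj) d0.
Qed.

Lemma chain_inc (R : realFieldType) (f : nat -> R) p q :
  (forall j, (p <= j)%N -> (j < q)%N -> f j <= f j.+1) -> (p <= q)%N -> f p <= f q.
Proof.
elim: q => [|q IH] h hpq; first by have -> : p = 0%N by lia.
case: (ltngtP p q.+1) => [l|l|<-] //; last by lia.
apply: le_trans (IH _ _) (h _ _ _); try lia.
by move=> j h1 h2; apply: h; lia.
Qed.

Lemma chain_dec (R : realFieldType) (f : nat -> R) p q :
  (forall j, (p <= j)%N -> (j < q)%N -> f j.+1 <= f j) -> (p <= q)%N -> f q <= f p.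
Proof.
elim: q => [|q IH] h hpq; first by have -> : p = 0%N by lia.
case: (ltngtP p q.+1) => [l|l|<-] //; last by lia.
apply: le_trans (h _ _ _) (IH _ _); try lia.
by move=> j h1 h2; apply: h; lia.
Qed.

Lemma ex_min (R : realFieldType) (f : nat -> R) (s : seq nat) :
  s != [::] -> exists2 i, i \in s & forall j, j \in s -> f i <= f j.
Proof.
elim: s => [//|y s IH] _.
case: s IH => [|z s] IH.
  by exists y => [|j]; rewrite ?inE // => /eqP ->.
have [i hi hmin] := IH isT.
case: (leP (f y) (f i)) => h.
  exists y; first by rewrite inE eqxx.
  move=> j; rewrite inE => /orP [/eqP ->//|/hmin]; exact: le_trans.
exists i; first by rewrite inE hi orbT.
move=> j; rewrite inE => /orP [/eqP ->|/hmin //]; exact: ltW.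
Qed.

Lemma has_Pmin (R : realFieldType) (a : nat -> R) n K :
  (0 < K)%N -> has (Pmin a n K) (iota 1 K).
Proof.
move=> hK; have [i hi hm] := @ex_min R (sg a n K) (iota 1 K) (ltac:(by case: K hK)).
apply/hasP; exists i => //; apply/allP => j hj; exact: hm.
Qed.

Lemma ix_bounds (R : realFieldType) (a : nat -> R) n K :
  (0 < K)%N -> (1 <= ixg a n K)%N /\ (ixg a n K <= K)%N.
Proof.
move=> hK; split => //; rewrite /ixg.
have := has_Pmin a n hK; rewrite has_find size_iota; done.
Qed.

Lemma ix_min (R : realFieldType) (a : nat -> R) n K j :
  (0 < K)%N -> (1 <= j)%N -> (j <= K)%N -> sg a n K (ixg a n K) <= sg a n K j.
Proof.
move=> hK h1 h2.
have := has_Pmin a n hK; rewrite has_find size_iota => hf.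
have := nth_find 0 (has_Pmin a n hK).
rewrite nth_iota // add1n => /allP; apply.
rewrite mem_iota; lia.
Qed.

Lemma ix_first (R : realFieldType) (a : nat -> R) n K i :
  (1 <= i)%N -> (i < ixg a n K)%N ->
  exists2 j, (1 <= j <= K)%N & sg a n K j < sg a n K i.
Proof.
move=> h1 h2.
have hk : (i.-1 < find (Pmin a n K) (iota 1 K))%N by rewrite /ixg in h2; lia.
have := before_find 0 hk.
have hK : (i.-1 < K)%N.
  by apply: leq_trans hk _; have := find_size (Pmin a n K) (iota 1 K); rewrite size_iota.
rewrite nth_iota // add1n prednK // => /negbT /allPn [j hj].
rewrite -ltNge => lt; exists j => //; by rewrite mem_iota in hj; lia.
Qed.

Lemma dec_before (R : realFieldType) (a : nat -> R) n K i :
  Hyp a n K -> (1 <= i)%N -> (i < ixg a n K)%N -> sg a n K i.+1 < sg a n K i.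
Proof.
move=> H h1 h2.
have hK : (0 < K)%N by case: H => _ _ ? _; lia.
have [_ hix] := ix_bounds a n hK.
case: (leP 0 (sg a n K i.+1 - sg a n K i)) => hd; last by rewrite subr_lt0 in hd.
have [j /andP [hj1 hjK] lt] := ix_first h1 h2.
have inc : forall q, (i <= q)%N -> (q <= K)%N -> sg a n K i <= sg a n K q.
  move=> q hq1 hq2; apply: chain_inc => // k hk1 hk2.
  by rewrite -subr_ge0; apply: (propag H h1 hk1) => //; lia.
have : sg a n K i <= sg a n K j.
  case: (leqP i j) => hij; first exact: inc.
  exact: le_trans (inc _ (ltnW h2) hix) (@ix_min R a n K j hK hj1 hjK).
by rewrite leNgt lt.
Qed.

Lemma inc_after (R : realFieldType) (a : nat -> R) n K i :
  Hyp a n K -> (ixg a n K <= i)%N -> (i < K)%N -> sg a n K i <= sg a n K i.+1.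
Proof.
move=> H h1 h2.
have hK : (0 < K)%N by case: H => _ _ ? _; lia.
have [hix1 hix] := ix_bounds a n hK.
case: (leP 0 (sg a n K i.+1 - sg a n K i)) => hd; first by rewrite subr_ge0 in hd.
have neg : forall k, (ixg a n K <= k)%N -> (k <= i)%N ->
    sg a n K k.+1 < sg a n K k.
  move=> k hk1 hk2; case: (leP 0 (sg a n K k.+1 - sg a n K k)) => hk.
    have := propag H (_ : 1 <= k)%N hk2 h2 hk; move=> /(_ _) h.
    by have := h ltac:(lia); rewrite leNgt hd.
  by rewrite subr_lt0 in hk.
have dec : sg a n K i <= sg a n K (ixg a n K).
  apply: chain_dec => // k hk1 hk2; apply: ltW; apply: neg => //; lia.
have := @ix_min R a n K i.+1 hK (ltac:(lia)) h2.
rewrite subr_lt0 in hd.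
move=> hle; have := le_lt_trans hle (lt_le_trans hd dec); by rewrite ltxx.
Qed.

Definition ufg (R : realFieldType) (a : nat -> R) (n K k : nat) : R :=
  if (k < ixg a n K)%N then a k
  else if (k <= K)%N then sg a n K (ixg a n K) else 0.

Lemma uf1 (R : realFieldType) (a : nat -> R) n K :
  Hyp a n K -> ufg a n K 1 = Num.max (a 1%N) (sg a n K 1).
Proof.
move=> H; have hK : (1 < K)%N by case: H.
rewrite /ufg; case: ifP => h.
  have := dec_before H (isT : (1 <= 1)%N) h.
  rewrite -subr_lt0 ltNge (sign2 H (isT : (1 <= 1)%N) hK).
  by rewrite -ltNge => lt; rewrite max_l // ltW.
have e : ixg a n K = 1%N.
  have [h1 _] := ix_bounds a n (ltnW hK); lia.
have := inc_after H (_ : ixg a n K <= 1)%N hK; move=> /(_ ltac:(by rewrite e)).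
rewrite e (ltnW hK).
rewrite -subr_ge0 (sign2 H (isT : (1 <= 1)%N) hK) => le; by rewrite max_r.
Qed.

Lemma ufg_mono (R : realFieldType) (a : nat -> R) n K k :
  Hyp a n K -> (0 < k)%N -> ufg a n K k.+1 <= ufg a n K k.
Proof.
move=> H hk; have hK : (1 < K)%N by case: H.
have [h1 hix] := ix_bounds a n (ltnW hK).
rewrite /ufg; case: (ltnP k.+1 (ixg a n K)) => h.
  by rewrite (ltnW h); case: H => _ hm _ _; apply: hm.
case: (ltnP k (ixg a n K)) => h'.
  have -> : (k.+1 <= K)%N by lia.
  have -> : ixg a n K = k.+1 by lia.
  have := dec_before H hk h'.
  rewrite -subr_lt0 ltNge (sign1 H hk (_ : k < K)%N); last by lia.
  by rewrite -ltNge => lt; apply: ltW.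
case: (leqP k.+1 K) => h2; first by rewrite (ltnW h2).
case: (leqP k K) => h3 //; exact: sg_ge0.
Qed.

Definition TT (R : realFieldType) (a : nat -> R) (n K j : nat) : R :=
  \sum_(1 <= i < j.+1) (ufg a n K i - a i).

Lemma TT_rec (R : realFieldType) (a : nat -> R) n K j :
  TT a n K j.+1 = TT a n K j + (ufg a n K j.+1 - a j.+1).
Proof. by rewrite /TT big_nat_recr. Qed.

Lemma T_before (R : realFieldType) (a : nat -> R) n K j :
  (j < ixg a n K)%N -> TT a n K j = 0.
Proof.
elim: j => [|j IH] h; first by rewrite /TT big_geq.
by rewrite TT_rec IH ?(ltnW h) // /ufg h subrr addr0.
Qed.

Lemma T_base (R : realFieldType) (a : nat -> R) n K j :
  Hyp a n K -> j.+1 = ixg a n K ->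
  TT a n K j = SS a n j.+1 - (K - j)%:R * sg a n K (ixg a n K).
Proof.
move=> H e; rewrite T_before ?e // /sg -e.
have hK : (0 < K)%N by case: H => _ _ ? _; lia.
have [_ hix] := ix_bounds a n hK.
have -> : (K - j.+1 + 1 = K - j)%N by lia.
have hm : (K - j)%:R != 0 :> R by rewrite pnatr_eq0; lia.
set m := (K - j)%:R : R in hm *; set S := SS a n j.+1; clearbody m S.
by field; rewrite hm.
Qed.

Lemma T_after (R : realFieldType) (a : nat -> R) n K j :
  Hyp a n K -> (ixg a n K <= j.+1)%N -> (j <= n)%N ->
  TT a n K j = SS a n j.+1 - (K - j)%:R * sg a n K (ixg a n K).
Proof.
move=> H; elim: j => [|j IH] h1 h2.
  by apply: T_base => //; have [] := ix_bounds a n (_ : 0 < K)%N; case: H => _ _ ? _; lia.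
case: (ltngtP (ixg a n K) j.+2) => [lt|gt|eq]; last by apply: T_base.
  2: by lia.
rewrite TT_rec IH; [|lia|lia].
rewrite (SS_rec a (_ : j.+1 <= n)%N) //.
rewrite /ufg; have -> : (j.+1 < ixg a n K)%N = false by lia.
case: (leqP j.+1 K) => hK.
  have -> : (K - j = (K - j.+1) + 1)%N by lia.
  rewrite natrD.
  set d := sg a n K (ixg a n K); set m := (K - j.+1)%:R : R; set S := SS a n j.+2.
  clearbody d m S. ring.
have -> : (K - j = 0)%N by lia.
have -> : (K - j.+1 = 0)%N by lia.
rewrite !mul0r !subr0. ring.
Qed.

Lemma maj_partial (R : realFieldType) (a : nat -> R) n K j :
  Hyp a n K -> (j < n)%N -> 0 <= TT a n K j.
Proof.
move=> H hj; have hK : (1 < K)%N by case: H.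
case: (ltnP j (ixg a n K)) => h; first by rewrite T_before.
rewrite T_after //; [|lia|lia].
case: (ltnP j K) => hjK.
  have hm : (K - j)%:R != 0 :> R by rewrite pnatr_eq0; lia.
  have e : SS a n j.+1 = (K - j)%:R * sg a n K j.+1.
    rewrite /sg; have -> : (K - j.+1 + 1 = K - j)%N by lia.
    by rewrite mulrC divfK.
  rewrite e -mulrBr mulr_ge0 // subr_ge0.
  apply: chain_inc; last by lia.
  move=> k h1 h2; apply: inc_after => //; lia.
have -> : (K - j = 0)%N by lia.
by rewrite mul0r subr0; apply: SS_ge0 H.
Qed.

Lemma maj_total (R : realFieldType) (a : nat -> R) n K :
  Hyp a n K -> TT a n K n = 0.
Proof.
move=> H; have [hK hKn] : (1 < K)%N /\ (K < n)%N by case: H.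
have [_ hix] := ix_bounds a n (ltnW hK).
rewrite T_after //; last by lia.
have -> : (K - n = 0)%N by lia.
by rewrite /SS big_geq // mul0r subr0.
Qed.

Lemma path_iota (r : rel nat) m l : (forall k, r k k.+1) -> path r m (iota m.+1 l).
Proof. by move=> hr; elim: l m => [//|l IH] m /=; rewrite hr IH. Qed.

Lemma sorted_iota (r : rel nat) m l : (forall k, r k k.+1) -> sorted r (iota m l).
Proof. by move=> hr; case: l => //= l; apply: path_iota. Qed.

Lemma kth_u (R : realFieldType) (n K : nat) (x : 'I_n -> R) i :
  (forall k, (0 < k)%N -> uf K x k.+1 <= uf K x k) ->
  (1 <= i)%N -> (i <= n)%N -> kth (u K x) i = uf K x i.
Proof.
move=> hm h1 h2.
rewrite /kth /dsort.
have -> : [seq u K x j | j <- enum 'I_n] = map (fun k => uf K x k.+1) (iota 0 n).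
  by rewrite -val_enum_ord -map_comp.
rewrite sorted_sort; last first.
- rewrite sorted_map; apply: sorted_iota => k /=; exact: hm.
- exact: ge_trans.
rewrite (nth_map 0%N); last by rewrite size_iota; lia.
by rewrite nth_iota ?add0n ?prednK //; lia.
Qed.

Unset Implicit Arguments.

Theorem mainTheorem5 (R : realFieldType) (n K : nat) (x : 'I_n -> R) :
  (1 < K)%N -> (K < n)%N ->
  (* (1) *)
  (forall i : nat, (1 <= i)%N -> (i <= K - 1)%N ->
     sx K x i.+1 - sx K x i
       = (sx K x i.+1 - kth (absv x) i) / (K - i + 1)%:R /\
     sx K x i.+1 - sx K x i
       = (sx K x i - kth (absv x) i) / (K - i)%:R) /\
  (* (2) *)
  (forall i : nat, (1 <= i)%N -> (i < ix K x)%N -> sx K x i.+1 <= sx K x i) /\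
  (forall i : nat, (ix K x <= i)%N -> (i < K)%N -> sx K x i <= sx K x i.+1) /\
  (* (3) *)
  majorizes (u K x) (absv x) /\
  (* (4) *)
  uf K x 1 = Num.max (kth (absv x) 1) (sx K x 1).
Proof.
move=> hK hKn.
have H : Hyp (kth (absv x)) n K.
  split => //; [exact: kth_abs_ge0 | exact: kth_abs_mono].
have e_sx : forall i, sx K x i = sg (kth (absv x)) n K i by [].
have e_ix : ix K x = ixg (kth (absv x)) n K by [].
have e_uf : forall k, uf K x k = ufg (kth (absv x)) n K k by [].
have hmono : forall k, (0 < k)%N -> uf K x k.+1 <= uf K x k.
  by move=> k hk; rewrite !e_uf; apply: ufg_mono.
split.
  move=> i h1 h2; rewrite !e_sx; apply: formula => //; lia.
split.
  by move=> i h1 h2; rewrite !e_sx; apply: ltW; apply: dec_before.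
split.
  by move=> i h1 h2; rewrite !e_sx; apply: inc_after.
split; last by rewrite e_uf e_sx; apply: uf1.
split.
  move=> j hj.
  rewrite -subr_ge0.
  rewrite (@eq_big_nat _ _ _ 1 j.+1 _ (fun i => ufg (kth (absv x)) n K i)); last first.
    by move=> i /andP [h1 h2]; rewrite kth_u //; lia.
  rewrite -sumrB; exact: (maj_partial H hj).
apply/eqP; rewrite -subr_eq0.
rewrite (@eq_big_nat _ _ _ 1 n.+1 _ (fun i => ufg (kth (absv x)) n K i)); last first.
  by move=> i /andP [h1 h2]; rewrite kth_u //; lia.
rewrite -sumrB; apply/eqP; exact: (maj_total H).
Qed.
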